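(* Let $n\ge2$, let $A_1,\dots,A_n$ be nonzero real $n\times n$ matrices, and let $G_B$ be as in the context. (i) If there is $\lambda>0$ such that $\|A_i-\lambda I_n\|_{\mathrm{op}}\le\lambda/4$ for all $i=1,\dots,n$, then $G_B$ is monotone. (ii) If there is $\lambda>0$ such that $\|A_i-\lambda I_n\|_{\mathrm{op}}<\lambda/4$ for all $i=1,\dots,n$, then $G_B$ is $3$-monotone.
   Context: $B(u,v,w)=\mathrm{diag}[u^TA_1v,\dots,u^TA_nv]\,w$ for $u,v,w\in\mathbb R^n$; $G_B(0)=0$ and $G_B(u)=B(u,u,u)/|u|$ for $u\ne0$, with $|\cdot|$ the Euclidean norm. $\|A\|_{\mathrm{op}}=\max_{|x|=1}|Ax|$. A map $F:\mathbb R^n\to\mathbb R^n$ is monotone if $(F(u)-F(v))\cdot(u-v)\ge0$ for all $u,v$; for $\alpha>0$ it is $\alpha$-monotone if there is $C>0$ with $(F(u)-F(v))\cdot(u-v)\ge C|u-v|^\alpha$ for all $u,v$. *)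

(* Defs.v *)
From HB Require Import structures.
From mathcomp Require Import all_boot all_order all_algebra.
From mathcomp Require Import all_classical all_reals exp.
Set Implicit Arguments. Unset Strict Implicit. Unset Printing Implicit Defensive.
Import Order.TTheory GRing.Theory Num.Theory.
Local Open Scope ring_scope.
Local Open Scope classical_set_scope.

Definition dotv (R : realType) (n : nat) (u v : 'cV[R]_n) : R :=
  \sum_(i < n) u i 0 * v i 0.

Definition enorm (R : realType) (n : nat) (u : 'cV[R]_n) : R :=
  Num.sqrt (dotv u u).

Definition opnorm (R : realType) (n : nat) (A : 'M[R]_n) : R :=
  sup [set enorm (A *m x) | x in [set x : 'cV[R]_n | enorm x = 1]].

Definition bil (R : realType) (n : nat) (A : 'M[R]_n) (u v : 'cV[R]_n) : R :=
  (u^T *m A *m v) 0 0.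

Definition Bmap (R : realType) (n : nat) (A : 'I_n -> 'M[R]_n)
  (u v w : 'cV[R]_n) : 'cV[R]_n :=
  \col_(i < n) (bil (A i) u v * w i 0).

Definition GB (R : realType) (n : nat) (A : 'I_n -> 'M[R]_n)
  (u : 'cV[R]_n) : 'cV[R]_n :=
  if u == 0 then 0 else (enorm u)^-1 *: Bmap A u u u.

Definition monotone (R : realType) (n : nat) (F : 'cV[R]_n -> 'cV[R]_n) :=
  forall u v : 'cV[R]_n, 0 <= dotv (F u - F v) (u - v).

Definition alpha_monotone (R : realType) (n : nat) (alpha : R)
  (F : 'cV[R]_n -> 'cV[R]_n) :=
  exists C : R, 0 < C /\
    forall u v : 'cV[R]_n, C * powR (enorm (u - v)) alpha <= dotv (F u - F v) (u - v).

(* Main.v *)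
Require Import Defs.
From HB Require Import structures.
From mathcomp Require Import all_boot all_order all_algebra.
From mathcomp Require Import all_classical all_reals exp.
From mathcomp Require Import ring lra.
Import Order.TTheory GRing.Theory Num.Theory.
Local Open Scope ring_scope.
Set Implicit Arguments. Unset Strict Implicit.

Lemma CS_sum (R : realType) (n : nat) (f g : 'I_n -> R) :
  (\sum_i f i * g i) ^+ 2 <= (\sum_i f i ^+ 2) * (\sum_i g i ^+ 2).
Proof.
set a := \sum_i g i ^+ 2; set b := \sum_i f i * g i; set c := \sum_i f i ^+ 2.
have quad : forall k : R, 0 <= c - 2 * k * b + k ^+ 2 * a.
  move=> k.
  have -> : c - 2 * k * b + k ^+ 2 * a = \sum_i (f i - k * g i) ^+ 2.
    rewrite /a /b /c mulr_sumr mulr_sumr -sumrB -big_split /=.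
    by apply: eq_bigr => i _; ring.
  by apply: sumr_ge0 => i _; exact: sqr_ge0.
have a0 : 0 <= a by apply: sumr_ge0 => i _; exact: sqr_ge0.
have [az|anz] := eqVneq a 0.
  have g0 : forall i, g i = 0.
    move=> i; have /psumr_eq0P h : a = 0 by [].
    by apply/eqP; rewrite -sqrf_eq0; apply/eqP/h => // j _; exact: sqr_ge0.
  have -> : b = 0 by rewrite /b big1 // => i _; rewrite g0 mulr0.
  by rewrite expr0n /= mulr_ge0 // sumr_ge0 // => i _; exact: sqr_ge0.
have ap : 0 < a by rewrite lt_def anz a0.
have h := quad (b / a).
have hk : b / a * a = b by rewrite divfK.
nra.
Qed.

Lemma dotvC (R : realType) (n : nat) (u v : 'cV[R]_n) : dotv u v = dotv v u.
Proof. by apply: eq_bigr => i _; rewrite mulrC. Qed.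

Lemma dotvDr (R : realType) (n : nat) (u v w : 'cV[R]_n) :
  dotv u (v + w) = dotv u v + dotv u w.
Proof. rewrite /dotv -big_split; apply: eq_bigr => i _; rewrite !mxE /=; ring. Qed.

Lemma dotvBr (R : realType) (n : nat) (u v w : 'cV[R]_n) :
  dotv u (v - w) = dotv u v - dotv u w.
Proof. rewrite /dotv -sumrB; apply: eq_bigr => i _; rewrite !mxE /=; ring. Qed.

Lemma dotvBl (R : realType) (n : nat) (u v w : 'cV[R]_n) :
  dotv (v - w) u = dotv v u - dotv w u.
Proof. by rewrite dotvC dotvBr !(dotvC u). Qed.

Lemma dotvZr (R : realType) (n : nat) (k : R) (u v : 'cV[R]_n) :
  dotv u (k *: v) = k * dotv u v.
Proof. rewrite /dotv mulr_sumr; apply: eq_bigr => i _; rewrite !mxE; ring. Qed.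

Lemma dotv_ge0 (R : realType) (n : nat) (u : 'cV[R]_n) : 0 <= dotv u u.
Proof. by apply: sumr_ge0 => i _; rewrite -expr2 sqr_ge0. Qed.

Lemma enorm_ge0 (R : realType) (n : nat) (u : 'cV[R]_n) : 0 <= enorm u.
Proof. exact: sqrtr_ge0. Qed.

Lemma enorm_sq (R : realType) (n : nat) (u : 'cV[R]_n) : enorm u ^+ 2 = dotv u u.
Proof. by rewrite /enorm sqr_sqrtr // dotv_ge0. Qed.

Lemma enorm_eq0 (R : realType) (n : nat) (u : 'cV[R]_n) : enorm u = 0 -> u = 0.
Proof.
move=> h; have : dotv u u = 0 by rewrite -enorm_sq h expr0n.
move/psumr_eq0P => H; apply/matrixP => i j; rewrite ord1 mxE.
apply/eqP; rewrite -sqrf_eq0 expr2; apply/eqP/H => // k _; rewrite -expr2 sqr_ge0 //.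
Qed.

Lemma sq_le (R : realType) (x y : R) : 0 <= y -> x ^+ 2 <= y ^+ 2 -> `|x| <= y.
Proof.
move=> y0 h; rewrite ler_norml; apply/andP; split; nra.
Qed.

Lemma CS_dot (R : realType) (n : nat) (u v : 'cV[R]_n) :
  `|dotv u v| <= enorm u * enorm v.
Proof.
apply: sq_le; first by rewrite mulr_ge0 ?enorm_ge0.
rewrite exprMn !enorm_sq.
have e : forall w : 'cV[R]_n, dotv w w = \sum_i (w i 0) ^+ 2.
  by move=> w; apply: eq_bigr => i _; rewrite expr2.
rewrite !e; exact: (CS_sum (fun i => u i 0) (fun i => v i 0)).
Qed.

Lemma dotv0r (R : realType) (n : nat) (u : 'cV[R]_n) : dotv u 0 = 0.
Proof. by rewrite /dotv big1 // => i _; rewrite mxE mulr0. Qed.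

Lemma dotv0l (R : realType) (n : nat) (u : 'cV[R]_n) : dotv 0 u = 0.
Proof. by rewrite dotvC dotv0r. Qed.

Lemma enorm0 (R : realType) (n : nat) : enorm (0 : 'cV[R]_n) = 0.
Proof. by rewrite /enorm dotv0r sqrtr0. Qed.

Lemma enormZ (R : realType) (n : nat) (k : R) (u : 'cV[R]_n) :
  enorm (k *: u) = `|k| * enorm u.
Proof.
rewrite /enorm dotvZr dotvC dotvZr mulrA -expr2 sqrtrM ?sqr_ge0 //.
by rewrite sqrtr_sqr.
Qed.

Lemma enorm_Mx_ub (R : realType) (n : nat) (E : 'M[R]_n) (y : 'cV[R]_n) :
  enorm y = 1 -> enorm (E *m y) <= Num.sqrt (\sum_i \sum_j E i j ^+ 2).
Proof.
move=> hy; rewrite /enorm ler_sqrt; last first.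
  by apply: sumr_ge0 => i _; apply: sumr_ge0 => j _; exact: sqr_ge0.
have yy : \sum_j y j 0 ^+ 2 = 1.
  have : dotv y y = 1 by rewrite -enorm_sq hy expr1n.
  by rewrite /dotv => <-; apply: eq_bigr => j _; rewrite expr2.
apply: ler_sum => i _; rewrite -expr2 mxE.
have := CS_sum (fun j => E i j) (fun j => y j 0).
by rewrite yy mulr1.
Qed.

Lemma opnorm_bound (R : realType) (n : nat) (E : 'M[R]_n) (x : 'cV[R]_n) (r : R) :
  opnorm E <= r -> enorm (E *m x) <= r * enorm x.
Proof.
move=> hr.
have [->|xnz] := eqVneq x 0.
  by rewrite mulmx0 enorm0 mulr0.
have sp : 0 < enorm x.
  rewrite lt_def enorm_ge0 andbT; apply/eqP => h; move: xnz; by rewrite (enorm_eq0 h) eqxx.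
set y := (enorm x)^-1 *: x.
have hy : enorm y = 1 by rewrite enormZ ger0_norm ?invr_ge0 ?enorm_ge0 // mulVf // gt_eqF.
have hs : has_sup [set enorm (E *m x) | x in [set x : 'cV[R]_n | enorm x = 1]].
  split; first by exists (enorm (E *m y)), y.
  exists (Num.sqrt (\sum_i \sum_j E i j ^+ 2)) => _ [z /= hz <-].
  exact: enorm_Mx_ub.
have := sup_upper_bound hs (ex_intro2 _ _ y hy erefl).
rewrite -/(opnorm E) /y -scalemxAr enormZ ger0_norm ?invr_ge0 ?enorm_ge0 // => h.
have := le_trans h hr; rewrite mulrC ler_pdivrMr //.
Qed.

Lemma diff_bound (R : realType) (r s t W a b : R) :
  0 <= r -> 0 < s -> 0 <= t -> t <= s -> s - t <= W ->
  `|a| <= r * s -> `|b| <= r * t -> `|a * s - b * t| <= r * W * (s + t) ->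
  `|a - b| <= 3 * r * W.
Proof.
move=> r0 s0 t0 ts stW ha hb hab.
have e : s * (a - b) = (a * s - b * t) + b * (t - s) by ring.
have h1 : `|s * (a - b)| <= `|a * s - b * t| + `|b| * (s - t).
  by rewrite e (le_trans (ler_normD _ _)) // normrM (distrC t s) (ger0_norm (x:=s - t)) ?subr_ge0.
have h2 : `|b| * (s - t) <= r * t * (s - t) by rewrite ler_wpM2r ?subr_ge0.
have W0 : 0 <= W by apply: le_trans stW; rewrite subr_ge0.
have h3 : r * t * (s - t) <= r * s * W.
  have p1 : 0 <= r * t by rewrite mulr_ge0.
  have p2 : t * (s - t) <= s * W by rewrite ler_pM ?subr_ge0.
  have := ler_wpM2l (mulr_ge0 r0 t0) stW; have := ler_wpM2r W0 ts. nra.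
have h4 : r * W * (s + t) <= 2 * r * W * s.
  have := ler_wpM2l (mulr_ge0 r0 W0) ts. nra.
rewrite normrM (ger0_norm (ltW s0)) in h1.
have : s * `|a - b| <= s * (3 * r * W) by lra.
by rewrite ler_pM2l.
Qed.

Lemma term_bound (R : realType) (lam r s t W a b x y : R) :
  0 <= r -> `|a| <= r * s -> `|b| <= r * t -> `|a - b| <= 3 * r * W ->
  (lam - r) * (s + t) / 2 * (x - y) ^+ 2 + lam * (s - t) / 2 * (x ^+ 2 - y ^+ 2)
    - 3 * r * W / 2 * (`|x - y| * `|x + y|)
  <= ((lam * s + a) * x - (lam * t + b) * y) * (x - y).
Proof.
move=> r0 ha hb hab.
have id : ((lam * s + a) * x - (lam * t + b) * y) * (x - y) =
  ((lam * s + a) + (lam * t + b)) / 2 * (x - y) ^+ 2 + lam * (s - t) / 2 * (x ^+ 2 - y ^+ 2)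
  + (a - b) * ((x - y) * (x + y)) / 2 by field.
rewrite id.
have p1 : (lam - r) * (s + t) <= (lam * s + a) + (lam * t + b).
  move: ha hb; rewrite !ler_norml => /andP[ha1 _] /andP[hb1 _]; lra.
have p1' : (lam - r) * (s + t) * (x - y) ^+ 2 <= ((lam * s + a) + (lam * t + b)) * (x - y) ^+ 2.
  by rewrite ler_wpM2r // sqr_ge0.
have p2 : - (3 * r * W * (`|x - y| * `|x + y|)) <= (a - b) * ((x - y) * (x + y)).
  rewrite lerNl; apply: le_trans (ler_norm _) _; rewrite normrN normrM normrM.
  by rewrite ler_wpM2r // mulr_ge0.
lra.
Qed.

Lemma sum3 (R : realType) (n : nat) (c1 c2 c3 : R) (x y z : 'I_n -> R) :
  \sum_i (c1 * x i + c2 * y i - c3 * z i) =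
  c1 * \sum_i x i + c2 * \sum_i y i - c3 * \sum_i z i.
Proof. by rewrite sumrB big_split /= !mulr_sumr. Qed.

Lemma core (R : realType) (n : nat) (lam r s t W P : R) (u v a b : 'I_n -> R) :
  0 <= lam -> 0 <= r -> 0 < s -> 0 <= t -> t <= s ->
  s ^+ 2 = \sum_i u i ^+ 2 -> t ^+ 2 = \sum_i v i ^+ 2 ->
  0 <= W -> W ^+ 2 = \sum_i (u i - v i) ^+ 2 ->
  0 <= P -> P ^+ 2 = \sum_i (u i + v i) ^+ 2 -> P <= s + t -> s - t <= W ->
  (forall i, `|a i| <= r * s) -> (forall i, `|b i| <= r * t) ->
  (forall i, `|a i * s - b i * t| <= r * W * (s + t)) ->
  (lam - 4 * r) / 2 * (s + t) * W ^+ 2 <=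
  \sum_i ((lam * s + a i) * u i - (lam * t + b i) * v i) * (u i - v i).
Proof.
move=> l0 r0 s0 t0 ts hs ht W0 hW P0 hP Pst stW ha hb hab.
have hd : forall i, `|a i - b i| <= 3 * r * W.
  by move=> i; exact: (diff_bound r0 s0 t0 ts stW (ha i) (hb i) (hab i)).
apply: (@le_trans _ _ (\sum_i ((lam - r) * (s + t) / 2 * (u i - v i) ^+ 2 + lam * (s - t) / 2 * (u i ^+ 2 - v i ^+ 2) - 3 * r * W / 2 * (`|u i - v i| * `|u i + v i|)))); last first.
  by apply: ler_sum => i _; exact: term_bound.
rewrite sum3 -hW sumrB -hs -ht.
set Z := \sum_i _.
have Z0 : 0 <= Z by apply: sumr_ge0 => i _; rewrite mulr_ge0.
have hZ : Z <= W * P.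
  have := CS_sum (fun i => `|u i - v i|) (fun i => `|u i + v i|).
  rewrite -/Z.
  under eq_bigr do rewrite -normrX ger0_norm ?sqr_ge0 //.
  under [X in _ <= _ * X]eq_bigr do rewrite -normrX ger0_norm ?sqr_ge0 //.
  rewrite -hW -hP -exprMn => h.
  by have := sq_le (mulr_ge0 W0 P0) h; rewrite ger0_norm.
have hZ2 : Z <= W * (s + t) by apply: le_trans hZ _; rewrite ler_wpM2l.
have q1 : r * W * Z <= r * W * (W * (s + t)) by rewrite ler_wpM2l // mulr_ge0.
have q2 : 0 <= lam * ((s - t) ^+ 2 * (s + t)).
  by rewrite mulr_ge0 // mulr_ge0 ?sqr_ge0 // addr_ge0 // ltW.
have e : s ^+ 2 - t ^+ 2 = (s - t) * (s + t) by ring.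
rewrite e.
nra.
Qed.

Lemma dotvDl (R : realType) (n : nat) (u v w : 'cV[R]_n) :
  dotv (v + w) u = dotv v u + dotv w u.
Proof. by rewrite dotvC dotvDr !(dotvC u). Qed.

Lemma bil_dot (R : realType) (n : nat) (A : 'M[R]_n) (u v : 'cV[R]_n) :
  bil A u v = dotv u (A *m v).
Proof.
rewrite /bil -mulmxA mxE /dotv; apply: eq_bigr => i _; by rewrite mxE.
Qed.

Lemma bil_shift (R : realType) (n : nat) (lam : R) (A : 'M[R]_n) (u : 'cV[R]_n) :
  bil A u u = lam * dotv u u + dotv u ((A - lam%:M) *m u).
Proof.
by rewrite bil_dot mulmxBl mul_scalar_mx dotvBr dotvZr addrC subrK.
Qed.

Lemma GB_coord (R : realType) (n : nat) (A : 'I_n -> 'M[R]_n) (u : 'cV[R]_n) i :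
  GB A u i 0 = (enorm u)^-1 * (bil (A i) u u * u i 0).
Proof.
rewrite /GB; case: eqP => [->|_]; first by rewrite !mxE !mulr0.
by rewrite !mxE.
Qed.

Lemma dot_E_bound (R : realType) (n : nat) (E : 'M[R]_n) (r : R) (x y : 'cV[R]_n) :
  (forall z, enorm (E *m z) <= r * enorm z) ->
  `|dotv x (E *m y)| <= r * enorm x * enorm y.
Proof.
move=> hE; apply: le_trans (CS_dot _ _) _.
by rewrite mulrC [r * _ * _]mulrAC ler_wpM2r ?enorm_ge0.
Qed.

Lemma enorm_gt0 (R : realType) (n : nat) (u : 'cV[R]_n) : enorm u != 0 -> 0 < enorm u.
Proof. by move=> h; rewrite lt_def h enorm_ge0. Qed.

Lemma sumsq (R : realType) (n : nat) (u : 'cV[R]_n) :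
  enorm u ^+ 2 = \sum_i (u i 0) ^+ 2.
Proof. by rewrite enorm_sq; apply: eq_bigr => i _; rewrite expr2. Qed.

Lemma key_le (R : realType) (n : nat) (A : 'I_n -> 'M[R]_n) (lam r : R) :
  0 <= lam -> 0 <= r ->
  (forall i z, enorm ((A i - lam%:M) *m z) <= r * enorm z) ->
  forall u v : 'cV[R]_n, enorm v <= enorm u ->
  (lam - 4 * r) / 2 * (enorm u + enorm v) * enorm (u - v) ^+ 2 <=
  dotv (GB A u - GB A v) (u - v).
Proof.
move=> l0 r0 hE u v vu.
set s := enorm u; set t := enorm v.
have t0 : 0 <= t := enorm_ge0 v.
have [s0|snz] := eqVneq s 0.
  have ut : u = 0 := enorm_eq0 s0.
  have vt : v = 0 by apply: enorm_eq0; apply/eqP; rewrite eq_le t0 andbT -/t -s0.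
  have t00 : t = 0 by rewrite /t vt enorm0.
  by rewrite s0 t00 addr0 mulr0 mul0r ut vt subr0 dotv0r.
have sp : 0 < s := enorm_gt0 snz.
pose E i := A i - lam%:M.
pose eu i := dotv u (E i *m u).
pose ev i := dotv v (E i *m v).
pose a i := eu i / s.
pose b i := ev i / t.
have ev0 : t = 0 -> forall i, ev i = 0.
  by move=> h i; rewrite /ev (enorm_eq0 h) dotv0l.
have hGu : forall i, GB A u i 0 = (lam * s + a i) * u i 0.
  move=> i; rewrite GB_coord (bil_shift lam) -enorm_sq -/s /a -/(E i) -/(eu i).
  by field.
have hGv : forall i, GB A v i 0 = (lam * t + b i) * v i 0.
  move=> i; rewrite GB_coord (bil_shift lam) -enorm_sq -/t /b -/(E i) -/(ev i).
  have [tz|tnz] := eqVneq t 0.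
    by rewrite (enorm_eq0 tz) !mxE !mulr0.
  by field.
have -> : dotv (GB A u - GB A v) (u - v) =
   \sum_i ((lam * s + a i) * u i 0 - (lam * t + b i) * v i 0) * (u i 0 - v i 0).
  by apply: eq_bigr => i _; rewrite !mxE hGu hGv.
have c := CS_dot u v; rewrite -/s -/t in c.
have hW : enorm (u - v) ^+ 2 = s ^+ 2 - 2 * dotv u v + t ^+ 2.
  by rewrite !enorm_sq dotvBl !dotvBr (dotvC v u); ring.
have hP : enorm (u + v) ^+ 2 = s ^+ 2 + 2 * dotv u v + t ^+ 2.
  by rewrite !enorm_sq dotvDl !dotvDr (dotvC v u); ring.
have W0 := enorm_ge0 (u - v).
have P0 := enorm_ge0 (u + v).
have cb := c; rewrite ler_norml in cb; case/andP: cb => c1 c2.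
have Pst : enorm (u + v) <= s + t.
  have : `|enorm (u + v)| <= s + t.
    apply: sq_le; first by rewrite addr_ge0 // ltW.
    rewrite hP; nra.
  by rewrite ger0_norm.
have stW : s - t <= enorm (u - v).
  have : `|s - t| <= enorm (u - v).
    apply: sq_le => //; rewrite hW; nra.
  by apply: le_trans; exact: ler_norm.
apply: (core (P := enorm (u + v))) => //.
- by rewrite sumsq.
- by rewrite sumsq.
- by rewrite sumsq; apply: eq_bigr => i _; rewrite !mxE.
- by rewrite sumsq; apply: eq_bigr => i _; rewrite !mxE.
- move=> i; rewrite /a normrM normfV (ger0_norm (ltW sp)) ler_pdivrMr //.
  have := dot_E_bound u u (hE i); rewrite -/s -/(E i) -/(eu i) => h.
  by apply: le_trans h _; rewrite -mulrA.
- move=> i; rewrite /b; have [tz|tnz] := eqVneq t 0.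
    by rewrite tz invr0 mulr0 normr0 mulr0.
  have tp : 0 < t := enorm_gt0 tnz.
  rewrite normrM normfV (ger0_norm (ltW tp)) ler_pdivrMr //.
  have := dot_E_bound v v (hE i); rewrite -/t -/(E i) -/(ev i) => h.
  by apply: le_trans h _; rewrite -mulrA.
- move=> i.
  have -> : a i * s = eu i by rewrite /a divfK.
  have -> : b i * t = ev i.
    rewrite /b; have [tz|tnz] := eqVneq t 0; last by rewrite divfK.
    by rewrite tz mulr0 ev0.
  have -> : eu i - ev i = dotv (u - v) (E i *m u) + dotv v (E i *m (u - v)).
    by rewrite /eu /ev mulmxBr dotvBl dotvBr; ring.
  apply: le_trans (ler_normD _ _) _.
  have h1 := dot_E_bound (u - v) u (hE i).
  have h2 := dot_E_bound v (u - v) (hE i).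
  rewrite -/(E i) -/s in h1; rewrite -/(E i) -/t in h2.
  have q1 : r * enorm (u - v) * s + r * t * enorm (u - v) = r * enorm (u - v) * (s + t) by ring.
  rewrite -q1; exact: lerD.
Qed.

Lemma dotvNN (R : realType) (n : nat) (x y : 'cV[R]_n) : dotv (- x) (- y) = dotv x y.
Proof. by apply: eq_bigr => i _; rewrite !mxE mulrNN. Qed.

Lemma enormN (R : realType) (n : nat) (x : 'cV[R]_n) : enorm (- x) = enorm x.
Proof. by rewrite /enorm dotvNN. Qed.

Lemma key (R : realType) (n : nat) (A : 'I_n -> 'M[R]_n) (lam r : R) :
  0 <= lam -> 0 <= r ->
  (forall i z, enorm ((A i - lam%:M) *m z) <= r * enorm z) ->
  forall u v : 'cV[R]_n,
  (lam - 4 * r) / 2 * (enorm u + enorm v) * enorm (u - v) ^+ 2 <=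
  dotv (GB A u - GB A v) (u - v).
Proof.
move=> l0 r0 hE u v.
have [h|h] := leP (enorm v) (enorm u); first exact: key_le.
have := key_le l0 r0 hE (ltW h).
by rewrite -(opprB u v) -(opprB (GB A u)) dotvNN enormN (addrC (enorm v)).
Qed.

Lemma enorm_sub_le (R : realType) (n : nat) (u v : 'cV[R]_n) :
  enorm (u - v) <= enorm u + enorm v.
Proof.
have c := CS_dot u v; rewrite ler_norml in c; case/andP: c => c1 c2.
have hW : enorm (u - v) ^+ 2 = enorm u ^+ 2 - 2 * dotv u v + enorm v ^+ 2.
  by rewrite !enorm_sq dotvBl !dotvBr (dotvC v u); ring.
have : `|enorm (u - v)| <= enorm u + enorm v.
  apply: sq_le; first by rewrite addr_ge0 ?enorm_ge0.
  rewrite hW; nra.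
by rewrite ger0_norm ?enorm_ge0.
Qed.

Unset Implicit Arguments.

Theorem mainTheorem7 (R : realType) (n : nat) (A : 'I_n -> 'M[R]_n) :
  (2 <= n)%N ->
  (forall i, A i != 0) ->
  ((exists lambda : R, 0 < lambda /\
      forall i, opnorm (A i - lambda%:M) <= lambda / 4) ->
     monotone (GB A))
  /\
  ((exists lambda : R, 0 < lambda /\
      forall i, opnorm (A i - lambda%:M) < lambda / 4) ->
     alpha_monotone 3 (GB A)).
Proof.
move=> _ _; split.
  case=> lam [lp h] u v.
  have hE : forall i z, enorm ((A i - lam%:M) *m z) <= lam / 4 * enorm z.
    by move=> i z; apply: opnorm_bound.
  have q : 0 <= lam / 4 by rewrite divr_ge0 // ltW.
  have := key (ltW lp) q hE u v.
  have -> : (lam - 4 * (lam / 4)) / 2 = 0 by field.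
  by rewrite !mul0r.
case=> lam [lp h].
set r := \big[Order.max/0]_i opnorm (A i - lam%:M).
have r0 : 0 <= r := bigmax_ge_id _ _ _ _.
have rl : r < lam / 4 by apply: bigmax_lt => [|i _]; rewrite ?divr_gt0.
have hE : forall i z, enorm ((A i - lam%:M) *m z) <= r * enorm z.
  by move=> i z; apply: opnorm_bound; exact: le_bigmax.
exists ((lam - 4 * r) / 2); split; first by rewrite divr_gt0 //; lra.
move=> u v.
have := key (ltW lp) r0 hE u v.
have W0 := enorm_ge0 (u - v).
rewrite (powR_mulrn 3 W0).
apply: le_trans.

have cp : 0 <= (lam - 4 * r) / 2 by rewrite divr_ge0 //; lra.
rewrite -[leRHS]mulrA ler_wpM2l //.

rewrite exprS ler_wpM2r ?exprn_ge0 //; exact: enorm_sub_le.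
Qed.
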